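(* Let $\Gamma\subset\mathbb{C}^n$ be a discrete subgroup with $\mathrm{rank}_{\mathbb{C}}\Gamma=n$, and let $X=\mathbb{C}^n/\Gamma$ have a period matrix of the form $$P=\begin{pmatrix}0 & I_m & T\\ I_{n-m} & R_1 & R_2\end{pmatrix},\qquad \det(\mathrm{Im}(T))\neq 0,$$ with $R_1,R_2$ real matrices. Suppose that the real $(n-m,2m)$-matrix $(R_1\ R_2)$ does not satisfy the irrationality condition, so that $X$ has the Remmert–Morimoto decomposition $X\cong(\mathbb{C}^* )^q\times Y$ with $q\ge 1$ and $Y=\mathbb{C}^r/\Lambda$ a toroidal group. Let $\mathbb{T}:=\mathbb{C}^m_\Gamma/\Lambda_{\mathbb{T}}$, where $\Lambda_{\mathbb{T}}$ is the lattice generated by the columns of $(I_m\ T)$. If $\mathbb{T}$ is an abelian variety, then $Y$ is a quasi-abelian variety of kind $0$.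
   Context: $\mathrm{rank}_{\mathbb{C}}\Gamma$ is the complex dimension of the complex linear span of $\Gamma$. $\mathbb{R}^{n+m}_\Gamma$ denotes the real linear span of $\Gamma$, and $\mathbb{C}^m_\Gamma=\mathbb{R}^{n+m}_\Gamma\cap\sqrt{-1}\,\mathbb{R}^{n+m}_\Gamma$ is the maximal complex linear subspace contained in it (here, in the coordinates of the period matrix, the span of the last $m$ coordinate directions paired with $(I_m\ T)$). A toroidal group is a connected commutative complex Lie group $\mathbb{C}^r/\Lambda$ on which every holomorphic function is constant; $\mathbb{C}^n/\Gamma$ with the period matrix above is toroidal iff $(R_1\ R_2)$ satisfies the irrationality condition. For a toroidal group $Y=\mathbb{C}^r/\Lambda$ with $\mathrm{rank}\,\Lambda=r+m$, an ample Riemann form is a hermitian form $\mathcal{H}$ on $\mathbb{C}^r$ which is positive definite on the maximal complex subspace $\mathbb{C}^m_\Lambda$ of the real span $\mathbb{R}^{r+m}_\Lambda$ of $\Lambda$ and whose imaginary part is $\mathbb{Z}$-valued on $\Lambda\times\Lambda$; it is of kind $k$ if the restriction of $\mathrm{Im}\,\mathcal{H}$ to $\mathbb{R}^{r+m}_\Lambda\times\mathbb{R}^{r+m}_\Lambda$ has rank $2(m+k)$. $Y$ is a quasi-abelian variety of kind $0$ if it admits an ample Riemann form of kind $0$. *)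

(* Defs.v *)
From HB Require Import structures.
From mathcomp Require Import all_boot all_order all_algebra.
From mathcomp Require Import complex.
From mathcomp Require Import boolp classical_sets reals topology normedtype derive.
Set Implicit Arguments. Unset Strict Implicit. Unset Printing Implicit Defensive.
Import Order.TTheory GRing.Theory Num.Theory.
Import numFieldNormedType.Exports.
Local Open Scope ring_scope.
Local Open Scope complex_scope.

(* Vectors of C^k are column vectors 'cV[R[i]]_k; a subgroup / lattice is given
   by the matrix whose columns are its generators. *)

Definition in_Zspan (R : realType) (k l : nat) (M : 'M[R[i]]_(k, l))
    (v : 'cV[R[i]]_k) : Prop :=
  exists c : 'cV[int]_l, v = M *m map_mx (fun z : int => z%:~R) c.

Definition in_Rspan (R : realType) (k l : nat) (M : 'M[R[i]]_(k, l))
    (v : 'cV[R[i]]_k) : Prop :=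
  exists a : 'cV[R]_l, v = M *m map_mx (fun x : R => x%:C) a.

Definition in_max_complex_subspace (R : realType) (k l : nat)
    (M : 'M[R[i]]_(k, l)) (v : 'cV[R[i]]_k) : Prop :=
  in_Rspan M v /\ exists u, in_Rspan M u /\ v = 'i *: u.

(* the columns of M are R-linearly independent (so their Z-span is discrete) *)
Definition R_independent_cols (R : realType) (k l : nat) (M : 'M[R[i]]_(k, l))
  : Prop :=
  forall a : 'cV[R]_l, M *m map_mx (fun x : R => x%:C) a = 0 -> a = 0.

Definition irrationality_condition (R : realType) (p k : nat) (S : 'M[R]_(p, k))
  : Prop :=
  forall sigma : 'rV[int]_p, sigma != 0 ->
    ~ exists c : 'rV[int]_k,
        map_mx (fun z : int => z%:~R) sigma *m S = map_mx (fun z : int => z%:~R) c.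

Definition period_matrix (R : realType) (m p : nat) (T : 'M[R[i]]_m)
    (R1 R2 : 'M[R]_(p, m)) : 'M[R[i]]_(m + p, p + (m + m)) :=
  block_mx 0 (row_mx 1%:M T)
           1%:M (row_mx (map_mx (fun x : R => x%:C) R1)
                        (map_mx (fun x : R => x%:C) R2)).

Definition hform (R : realType) (k : nat) (H : 'M[R[i]]_k) (z w : 'cV[R[i]]_k)
  : R[i] :=
  (z^T *m H *m map_mx Num.conj w) 0 0.

Definition hermitian (R : realType) (k : nat) (H : 'M[R[i]]_k) : Prop :=
  forall i j, H j i = Num.conj (H i j).

(* Im H is Z-valued on Lambda x Lambda (Lambda = Z-span of the columns of Q);
   by bilinearity it suffices on the generators *)
Definition Im_integral_on (R : realType) (k l : nat) (H : 'M[R[i]]_k)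
    (Q : 'M[R[i]]_(k, l)) : Prop :=
  forall i j, exists z : int, complex.Im (hform H (col i Q) (col j Q)) = z%:~R.

(* The restriction of
   Im H to R^{r+s}_Lambda is represented in the real basis given by the
   columns of Q. *)
Definition ample_Riemann_form_of_kind (R : realType) (r s : nat)
    (Q : 'M[R[i]]_(r, r + s)) (H : 'M[R[i]]_r) (k : nat) : Prop :=
  [/\ hermitian H,
      (forall v, v != 0 -> in_max_complex_subspace Q v -> 0 < hform H v v),
      Im_integral_on H Q &
      \rank (\matrix_(i, j) complex.Im (hform H (col i Q) (col j Q)))
        = (2 * (s + k))%N].

Definition quasi_abelian_of_kind (R : realType) (r s : nat)
    (Q : 'M[R[i]]_(r, r + s)) (k : nat) : Prop :=
  exists H : 'M[R[i]]_r, ample_Riemann_form_of_kind Q H k.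

Definition abelian_variety (R : realType) (m : nat) (L : 'M[R[i]]_(m, m + m))
  : Prop :=
  exists H : 'M[R[i]]_m,
    [/\ hermitian H, (forall v, v != 0 -> 0 < hform H v v) & Im_integral_on H L].

(* holomorphic function on C^r: complex (Frechet) differentiable everywhere;
   the differential is R[i]-linear since 'cV[R[i]]_r is a normed R[i]-module *)
Definition holomorphic (R : realType) (r : nat) (f : 'cV[R[i]]_r -> R[i]^o)
  : Prop :=
  forall z, differentiable f z.

Definition toroidal (R : realType) (r l : nat) (Q : 'M[R[i]]_(r, l)) : Prop :=
  forall f : 'cV[R[i]]_r -> R[i]^o, holomorphic f ->
    (forall z v, in_Zspan Q v -> f (z + v) = f z) ->
    forall z w, f z = f w.

(* X = C^n / Gamma  is isomorphic (as complex Lie group) to (C^x)^q x Y,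
   Y = C^r / Lambda; with C^x = C^* = C / Z (via exp(2 pi i .)), this means a
   C-linear isomorphism C^n -> C^q x C^r carrying Gamma onto Z^q x Lambda. *)
Definition RM_decomposition (R : realType) (n l q r s : nat)
    (P : 'M[R[i]]_(n, l)) (Q : 'M[R[i]]_(r, r + s)) : Prop :=
  exists (A : 'M[R[i]]_(q + r, n)) (B : 'M[R[i]]_(n, q + r)),
    [/\ A *m B = 1%:M, B *m A = 1%:M &
        forall w, in_Zspan (block_mx (1%:M : 'M[R[i]]_q) 0 0 Q) w <->
                  exists v, in_Zspan P v /\ w = A *m v].

(* Main.v *)
Require Import Defs.
From HB Require Import structures.
From mathcomp Require Import all_boot all_order all_algebra.
From mathcomp Require Import complex.
From mathcomp Require Import boolp classical_sets reals topology normedtype derive.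
From mathcomp Require Import zify.
Import Order.TTheory GRing.Theory Num.Theory.
Import numFieldNormedType.Exports.
Local Open Scope ring_scope.
Local Open Scope complex_scope.
Set Implicit Arguments. Unset Strict Implicit.
Section Aux.
Variable R : realType.
Notation rc X := (map_mx (fun x : R => x%:C) X).
Notation cj X := (map_mx Num.conj X).
Notation imx X := (map_mx (fun z : R[i] => complex.Im z) X).

Lemma rcM m n p (X : 'M[R]_(m, n)) (Y : 'M[R]_(n, p)) : rc (X *m Y) = rc X *m rc Y.
Proof. exact: (map_mxM (real_complex R)). Qed.

Lemma conj_rc (x : R) : Num.conj (x%:C) = x%:C.
Proof. by apply: conj_Creal; rewrite complex_real. Qed.

Lemma cj_rc m n (X : 'M[R]_(m, n)) : cj (rc X) = rc X.
Proof. by apply/matrixP => i j; rewrite !mxE conj_rc. Qed.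

Lemma ImD (x y : R[i]) : complex.Im (x + y) = complex.Im x + complex.Im y.
Proof. by case: x; case: y. Qed.
Lemma Im0 : complex.Im (0 : R[i]) = 0. Proof. by []. Qed.
Lemma ImCM (x : R) (y : R[i]) : complex.Im (x%:C * y) = x * complex.Im y.
Proof. by case: y => a b /=; rewrite mul0r addr0. Qed.
Lemma ImMC (x : R) (y : R[i]) : complex.Im (y * x%:C) = complex.Im y * x.
Proof. by case: y => a b /=; rewrite mulr0 add0r. Qed.
Lemma Im_sum I (r : seq I) (P : pred I) (F : I -> R[i]) :
  complex.Im (\sum_(k <- r | P k) F k) = \sum_(k <- r | P k) complex.Im (F k).
Proof. exact: (big_morph _ ImD Im0). Qed.

Lemma imx_rcl m n p (X : 'M[R]_(m, n)) (Y : 'M[R[i]]_(n, p)) :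
  imx (rc X *m Y) = X *m imx Y.
Proof.
apply/matrixP => i j; rewrite !mxE Im_sum; apply: eq_bigr => k _.
by rewrite !mxE ImCM.
Qed.
Lemma imx_rcr m n p (Y : 'M[R[i]]_(m, n)) (X : 'M[R]_(n, p)) :
  imx (Y *m rc X) = imx Y *m X.
Proof.
apply/matrixP => i j; rewrite !mxE Im_sum; apply: eq_bigr => k _.
by rewrite !mxE ImMC.
Qed.

Lemma gram k l (H : 'M[R[i]]_k) (X : 'M[R[i]]_(k, l)) i j :
  hform H (col i X) (col j X) = (X^T *m H *m cj X) i j.
Proof.
by rewrite /hform tr_col map_col -row_mul !mxE; apply: eq_bigr => c _; rewrite !mxE.
Qed.

Lemma hformE k l (H : 'M[R[i]]_k) (E : 'M[R[i]]_(k, l)) u w :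
  hform (E^T *m H *m cj E) u w = hform H (E *m u) (E *m w).
Proof.
by rewrite /hform trmx_mul (map_mxM Num.conj) !mulmxA.
Qed.

Lemma hform_scaler k (H : 'M[R[i]]_k) u w c :
  hform H u (c *: w) = Num.conj c * hform H u w.
Proof.
rewrite /hform.
have -> : cj (c *: w) = Num.conj c *: cj w.
  by apply/matrixP => a b; rewrite !mxE rmorphM.
by rewrite -scalemxAr mxE.
Qed.

Lemma C_eq_iC (x y : R) : x%:C = 'i * y%:C -> x = 0 /\ y = 0.
Proof.
move=> /eqP; rewrite eq_complex /= => /andP[/eqP h1 /eqP h2].
split; first by rewrite h1; simpc.
move: h2; simpc => h2; by rewrite -h2.
Qed.

Notation remx X := (map_mx (fun z : R[i] => complex.Re z) X).

Lemma col_eq T m n (X Y : 'M[T]_(m, n)) : (forall j, col j X = col j Y) -> X = Y.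
Proof. by move=> h; apply/matrixP => i j; move/matrixP: (h j) => /(_ i 0); rewrite !mxE. Qed.

Lemma choose_mx T k l (Pr : 'I_l -> 'cV[T]_k -> Prop) :
  (forall j, exists c, Pr j c) -> exists X : 'M[T]_(k, l), forall j, Pr j (col j X).
Proof.
move=> h; have [f hf] := choice h.
exists (\matrix_(i, j) f j i 0) => j.
suff -> : col j (\matrix_(i, j) f j i 0) = f j by [].
by apply/matrixP => a b; rewrite !mxE (ord1 b).
Qed.

Lemma rc_inj m n (X Y : 'M[R]_(m, n)) : rc X = rc Y -> X = Y.
Proof. by move/matrixP=> h; apply/matrixP => i j; move: (h i j); rewrite !mxE => -[]. Qed.

Lemma rc_iC m n (X Y : 'M[R]_(m, n)) : rc X = 'i *: rc Y -> X = 0.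
Proof.
move/matrixP=> h; apply/matrixP => i j; move: (h i j); rewrite !mxE.
by case/C_eq_iC.
Qed.

Lemma rc_iC2 m n (X Y : 'M[R]_(m, n)) : rc X = 'i *: rc Y -> Y = 0.
Proof.
move/matrixP=> h; apply/matrixP => i j; move: (h i j); rewrite !mxE.
by case/C_eq_iC.
Qed.

Lemma imxD m n (X Y : 'M[R[i]]_(m, n)) : imx (X + Y) = imx X + imx Y.
Proof. by apply/matrixP => i j; rewrite !mxE ImD. Qed.

Lemma imx_rc m n (X : 'M[R]_(m, n)) : imx (rc X) = 0.
Proof. by apply/matrixP => i j; rewrite !mxE. Qed.

Lemma mxCE m n (X : 'M[R[i]]_(m, n)) : X = rc (remx X) + 'i *: rc (imx X).
Proof. by apply/matrixP => i j; rewrite !mxE -complexE. Qed.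

Lemma rcB m n (X Y : 'M[R]_(m, n)) : rc (X - Y) = rc X - rc Y.
Proof. exact: (map_mxB (real_complex R)). Qed.
Lemma rcD m n (X Y : 'M[R]_(m, n)) : rc (X + Y) = rc X + rc Y.
Proof. exact: (map_mxD (real_complex R)). Qed.

Definition isZ (x : R) := exists z : int, x = z%:~R.
Lemma isZ_mxM m n p (X : 'M[R]_(m, n)) (Y : 'M[R]_(n, p)) :
  (forall i j, isZ (X i j)) -> (forall i j, isZ (Y i j)) -> forall i j, isZ ((X *m Y) i j).
Proof.
move=> hX hY i j; rewrite mxE.
apply: (big_ind isZ); first by exists 0.
  by move=> x y [a ->] [b ->]; exists (a + b); rewrite intrD.
move=> k _; have [a ->] := hX i k; have [b ->] := hY k j.
by exists (a * b); rewrite intrM.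
Qed.

Lemma cjK m n (X : 'M[R[i]]_(m, n)) : cj (cj X) = X.
Proof. by apply/matrixP => i j; rewrite !mxE conjCK. Qed.

Lemma zc_rc m n (X : 'M[int]_(m, n)) :
  map_mx (fun z : int => z%:~R : R[i]) X = rc (map_mx (fun z : int => z%:~R : R) X).
Proof. by apply/matrixP => i j; rewrite !mxE (rmorph_int (real_complex R)). Qed.

Lemma zc_delta n (j : 'I_n) :
  map_mx (fun z : int => z%:~R : R[i]) (delta_mx j (0 : 'I_1)) = delta_mx j 0.
Proof. by apply/matrixP => a b; rewrite !mxE; case: (_ && _). Qed.

Lemma indep_mx k l n (M : 'M[R[i]]_(k, l)) (X : 'M[R]_(l, n)) :
  R_independent_cols M -> M *m rc X = 0 -> X = 0.
Proof.
move=> hM h; apply: col_eq => j; rewrite col0; apply: hM.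
by rewrite map_col colE mulmxA -colE h col0.
Qed.

End Aux.

Notation rc X := (map_mx (fun x : _ => x%:C) X).

Theorem lemma2p2 (R : realType) (m p : nat) (T : 'M[R[i]]_m)
    (R1 R2 : 'M[R]_(p, m)) :
  \det (map_mx (fun z : R[i] => complex.Im z) T) != 0 ->
  ~ irrationality_condition (row_mx R1 R2) ->
  abelian_variety (row_mx (1%:M : 'M[R[i]]_m) T) ->
  forall (q r s : nat) (Q : 'M[R[i]]_(r, r + s)),
    (1 <= q)%N ->
    R_independent_cols Q ->
    toroidal Q ->
    RM_decomposition q (period_matrix T R1 R2) Q ->
    quasi_abelian_of_kind Q 0.
Proof.
move=> hT _ [H [hH hpos hint]] q r s Q _ hQ _ [A [B [AB BA hZ]]].
set P := period_matrix T R1 R2.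
set L := row_mx (1%:M : 'M[R[i]]_m) T.
set K := block_mx (1%:M : 'M[R[i]]_q) 0 0 Q.
set ImT := map_mx (fun z : R[i] => complex.Im z) T.
have uT : ImT \in unitmx by rewrite unitmxE unitfE.
have Ls : forall w : 'cV[R[i]]_m, exists y : 'cV[R]_(m + m), L *m rc y = w.
  move=> w; set z := invmx ImT *m map_mx (fun z : R[i] => complex.Im z) w.
  exists (col_mx (map_mx (fun z : R[i] => complex.Re z) w - map_mx (fun z : R[i] => complex.Re z) T *m z) z).
  rewrite map_col_mx mul_row_col mul1mx rcB rcM {2}(mxCE T) mulmxDl -scalemxAl -rcM.
  rewrite -/ImT -(rcM ImT) /z (mulmxA ImT) (mulmxV uT) mul1mx addrA subrK.
  by rewrite [RHS]mxCE.
have Li : forall y : 'cV[R]_(m + m), L *m rc y = 0 -> y = 0.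
  move=> y; rewrite -[y]vsubmxK map_col_mx mul_row_col mul1mx => h.
  have h2 : ImT *m dsubmx y = 0.
    move: (congr1 (map_mx (fun z : R[i] => complex.Im z)) h).
    by rewrite imxD imx_rc add0r imx_rcr map_mx0.
  have hd : dsubmx y = 0 by rewrite -[dsubmx y](mulKmx uT) h2 mulmx0.
  move: h; rewrite hd map_mx0 mulmx0 addr0 -(map_mx0 (real_complex R)) => /rc_inj ->.
  by rewrite col_mx0.
set S := row_mx (1%:M : 'M[R]_p) (row_mx R1 R2).
have Pmul : forall k (X : 'M[R]_(p + (m + m), k)),
    P *m rc X = col_mx (L *m rc (dsubmx X)) (rc (S *m X)).
  move=> k X.
  have PE : P = col_mx (row_mx 0 L) (rc S).
    by rewrite /P /period_matrix block_mxEv /S !map_row_mx (map_mx1 (real_complex R)).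
  rewrite PE mul_col_mx -[X in row_mx 0 L *m rc X]vsubmxK map_col_mx mul_row_col.
  by rewrite mul0mx add0r rcM.
have Pind : R_independent_cols P.
  move=> a; rewrite Pmul => /eqP; rewrite col_mx_eq0 => /andP [/eqP h1 /eqP h2].
  have hd := Li _ h1.
  move: h2; rewrite -(map_mx0 (real_complex R)) => /rc_inj.
  rewrite -{1}[a]vsubmxK mul_row_col mul1mx hd mulmx0 addr0 => hu.
  by rewrite -[a]vsubmxK hu hd col_mx0.
have Kmul : forall k (X : 'M_(q, k)) Y, K *m col_mx X Y = col_mx X (Q *m Y).
  by move=> k X Y; rewrite mul_block_col !mul1mx !mul0mx addr0 add0r.
have Kind : R_independent_cols K.
  move=> a; rewrite -[a]vsubmxK map_col_mx Kmul => /eqP; rewrite col_mx_eq0.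
  case/andP => /eqP h1 /eqP /hQ h2.
  move: h1; rewrite -(map_mx0 (real_complex R)) => /rc_inj ->.
  by rewrite h2 col_mx0.
have [Cz hC] : exists Cz : 'M[int]_(p + (m + m), q + (r + s)),
    K = A *m P *m map_mx (fun z : int => z%:~R) Cz.
  have [X hX] : exists X : 'M[int]_(p + (m + m), q + (r + s)), forall j,
      col j K = A *m P *m map_mx (fun z : int => z%:~R) (col j X).
    apply: (@choose_mx int (p + (m + m)) (q + (r + s)) (fun j c => col j K = A *m P *m map_mx (fun z : int => z%:~R) c)).
    move=> j; have : in_Zspan K (col j K).
      by exists (delta_mx j 0); rewrite zc_delta -colE.
    by case/hZ => v [[c ->] ->]; exists c; rewrite mulmxA.
  exists X; apply: col_eq => j; rewrite hX map_col !colE !mulmxA.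
  by [].
have [Dz hD] : exists Dz : 'M[int]_(q + (r + s), p + (m + m)),
    A *m P = K *m map_mx (fun z : int => z%:~R) Dz.
  have [X hX] : exists X : 'M[int]_(q + (r + s), p + (m + m)), forall j,
      col j (A *m P) = K *m map_mx (fun z : int => z%:~R) (col j X).
    apply: (@choose_mx int (q + (r + s)) (p + (m + m)) (fun j c => col j (A *m P) = K *m map_mx (fun z : int => z%:~R) c)).
    move=> j; have : in_Zspan K (A *m col j P).
      apply/hZ; exists (col j P); split => //.
      by exists (delta_mx j 0); rewrite zc_delta -colE.
    by case => c hc; exists c; rewrite -hc !colE mulmxA.
  exists X; apply: col_eq => j; rewrite hX map_col !colE !mulmxA.
  by [].
set Cr := map_mx (fun z : int => z%:~R : R) Cz.
set Dr := map_mx (fun z : int => z%:~R : R) Dz.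
move: hC hD; rewrite !zc_rc -/Cr -/Dr => hK hD.
have N1 : (q + r = m + p)%N.
  apply/eqP; rewrite eqn_leq; apply/andP; split.
    rewrite -{1}(mxrank1 R[i] (q + r)) -AB.
    exact: leq_trans (mxrankM_maxl _ _) (rank_leq_col _).
  rewrite -{1}(mxrank1 R[i] (m + p)) -BA.
  exact: leq_trans (mxrankM_maxl _ _) (rank_leq_col _).
have DC : Dr *m Cr = 1%:M.
  apply/eqP; rewrite -subr_eq0; apply/eqP; apply: (indep_mx Kind).
  by rewrite rcB rcM (map_mx1 (real_complex R)) mulmxBr mulmx1 mulmxA -hD -hK subrr.
have BK : B *m K = P *m rc Cr by rewrite hK !mulmxA BA mul1mx.
have CD : Cr *m Dr = 1%:M.
  apply/eqP; rewrite -subr_eq0; apply/eqP; apply: (indep_mx Pind).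
  rewrite rcB rcM (map_mx1 (real_complex R)) mulmxBr mulmx1 mulmxA -BK -mulmxA -hD.
  by rewrite mulmxA BA mul1mx subrr.
have N2 : (p + (m + m) = q + (r + s))%N.
  apply/eqP; rewrite eqn_leq; apply/andP; split.
    rewrite -{1}(mxrank1 R (p + (m + m))) -CD.
    exact: leq_trans (mxrankM_maxl _ _) (rank_leq_col _).
  rewrite -{1}(mxrank1 R (q + (r + s))) -DC.
  exact: leq_trans (mxrankM_maxl _ _) (rank_leq_col _).
have sm : s = m by lia.
set E := usubmx (rsubmx B).
have EQ1 : rsubmx B *m Q = P *m rc (rsubmx Cr).
  move: BK; rewrite -{1}[B]hsubmxK /K mul_row_block => /(congr1 rsubmx).
  rewrite row_mxKr mulmx0 add0r -{1}[Cr]hsubmxK map_row_mx mul_mx_row row_mxKr.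
  by [].
set Cq := rsubmx Cr.
set G := dsubmx Cq.
have EQ : E *m Q = L *m rc G by rewrite /E mul_usub_mx EQ1 Pmul col_mxKu.
have Bv : forall a : 'cV[R]_(r + s), rsubmx B *m (Q *m rc a) = P *m rc (Cq *m a).
  by move=> a; rewrite mulmxA EQ1 -mulmxA rcM.
have GZ : forall i j, isZ (G i j).
  move=> i j; rewrite /G /Cq /Cr -map_rsubmx -map_dsubmx mxE.
  by eexists.
set J := map_mx (fun z : R[i] => complex.Im z) (L^T *m H *m map_mx Num.conj L).
set HY := E^T *m H *m map_mx Num.conj E.
have GY : Q^T *m HY *m map_mx Num.conj Q = (rc G)^T *m (L^T *m H *m map_mx Num.conj L) *m rc G.
  rewrite /HY !mulmxA -trmx_mul -!mulmxA -(map_mxM Num.conj) EQ trmx_mul.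
  by rewrite (map_mxM Num.conj) cj_rc !mulmxA.
have MatE : \matrix_(i, j) complex.Im (hform HY (col i Q) (col j Q)) = G^T *m J *m G.
  apply/matrixP => i j; rewrite mxE gram GY.
  transitivity ((map_mx (fun z : R[i] => complex.Im z) ((rc G)^T *m (L^T *m H *m map_mx Num.conj L) *m rc G)) i j).
    by rewrite [RHS]mxE.
  by rewrite imx_rcr map_trmx imx_rcl.
exists HY; split.
- move=> i j.
  have hHt : H^T = map_mx Num.conj H by apply/matrixP => a b; rewrite !mxE hH.
  have : HY^T = map_mx Num.conj HY.
    rewrite /HY !trmx_mul trmxK hHt !(map_mxM Num.conj) cjK -map_trmx mulmxA.
    by [].
  by move/matrixP => /(_ i j); rewrite !mxE.
- move=> v hv [[a ha] [u [[b hb] hu]]].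
  rewrite hformE; apply: hpos; apply/eqP => hE.
  have e1 : rsubmx B *m v = P *m rc (Cq *m a) by rewrite ha Bv.
  have hd : dsubmx (rsubmx B *m v) = 0.
    have e2 : rsubmx B *m v = 'i *: (P *m rc (Cq *m b)) by rewrite hu hb -scalemxAr Bv.
    have := congr1 dsubmx (etrans (esym e1) e2).
    rewrite !Pmul scale_col_mx !col_mxKd => /rc_iC hz.
    by rewrite e1 Pmul col_mxKd hz map_mx0.
  have hu0 : usubmx (rsubmx B *m v) = 0 by rewrite -mul_usub_mx.
  have h0 : B *m col_mx 0 v = 0.
    by rewrite -{1}[B]hsubmxK mul_row_col mulmx0 add0r -[rsubmx B *m v]vsubmxK hu0 hd col_mx0.
  have : col_mx (0 : 'cV_q) v = 0 by rewrite -[col_mx _ _]mul1mx -AB -mulmxA h0 mulmx0.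
  by move/eqP; rewrite col_mx_eq0 eqxx (negPf hv).
- move=> i j; move/matrixP: MatE => /(_ i j); rewrite mxE => ->.
  apply: isZ_mxM; last exact: GZ.
  apply: isZ_mxM; first by move=> a b; rewrite mxE; exact: GZ.
  by move=> a b; rewrite /J mxE -gram; exact: hint.
rewrite MatE.
have JH : forall x y : 'cV[R]_(m + m),
    (x^T *m J *m y) 0 0 = complex.Im (hform H (L *m rc x) (L *m rc y)).
  move=> x y; rewrite /hform trmx_mul (map_mxM Num.conj) cj_rc.
  have -> : (rc x)^T *m L^T *m H *m (map_mx Num.conj L *m rc y)
      = (rc x)^T *m (L^T *m H *m map_mx Num.conj L) *m rc y by rewrite !mulmxA.
  transitivity ((map_mx (fun z : R[i] => complex.Im z) ((rc x)^T *m (L^T *m H *m map_mx Num.conj L) *m rc y)) 0 0); last by rewrite [LHS]mxE.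
  by rewrite imx_rcr map_trmx imx_rcl.
have Jfree : row_free J.
  rewrite -kermx_eq0; apply/eqP/row_matrixP => i; rewrite row0.
  set u := row i (kermx J).
  have uJ : u *m J = 0 by rewrite /u -row_mul mulmx_ker row0.
  set w := L *m rc u^T.
  have [y hy] := Ls ('i *: w).
  have : complex.Im (hform H w ('i *: w)) = 0.
    by rewrite -hy -JH trmxK uJ mul0mx mxE.
  rewrite hform_scaler conjCi.
  case: (eqVneq w 0) => [hw0 _ | hw].
    by rewrite -[u]trmxK (Li _ hw0) trmx0.
  have := hpos _ hw; rewrite ltcE => /andP [_].
  case: (hform H w w) => a b /= hre.
  rewrite mulN1r oppr0 mul0r add0r => /eqP; rewrite oppr_eq0 => /eqP a0.
  by rewrite a0 ltxx in hre.
have Gsurj : forall y : 'cV[R]_(m + m), exists a : 'cV[R]_(r + s), G *m a = y.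
  move=> y.
  have mk : forall y0 : 'cV[R]_(m + m),
      P *m rc (col_mx (- (row_mx R1 R2 *m y0)) y0) = col_mx (L *m rc y0) 0.
    by move=> y0; rewrite Pmul col_mxKd mul_row_col mul1mx addNr map_mx0.
  set w := L *m rc y.
  have [y' hy'] := Ls ('i *: w).
  set w0 := col_mx w (0 : 'cV_p).
  have e1 : A *m w0 = K *m rc (Dr *m col_mx (- (row_mx R1 R2 *m y)) y).
    by rewrite /w0 /w -mk mulmxA hD rcM mulmxA.
  have e2 : 'i *: (A *m w0) = K *m rc (Dr *m col_mx (- (row_mx R1 R2 *m y')) y').
    by rewrite scalemxAr /w0 scale_col_mx scaler0 -hy' -mk mulmxA hD rcM mulmxA.
  move: (Dr *m col_mx (- (row_mx R1 R2 *m y)) y) e1 => u e1.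
  move: (Dr *m col_mx (- (row_mx R1 R2 *m y')) y') e2 => u' e2.
  move: e1 e2; rewrite -[u]vsubmxK -[u']vsubmxK !map_col_mx !Kmul => e1 e2.
  have u10 : usubmx u = 0.
    move: e2; rewrite e1 scale_col_mx => /(congr1 usubmx); rewrite !col_mxKu.
    by move/esym/rc_iC2.
  have : w0 = P *m rc (Cq *m dsubmx u).
    rewrite -[w0]mul1mx -BA -mulmxA e1 u10 map_mx0 -{1}[B]hsubmxK mul_row_col.
    by rewrite mulmx0 add0r Bv.
  move/(congr1 usubmx); rewrite Pmul !col_mxKu /w -mul_dsub_mx -/G => h.
  exists (dsubmx u); apply/eqP; rewrite -subr_eq0; apply/eqP; apply: Li.
  by rewrite rcB mulmxBr h subrr.
have Gfree : row_free G.
  apply/row_freeP.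
  have [X hX] := @choose_mx R (r + s) (m + m) (fun j a => G *m a = col j 1%:M) (fun j => Gsurj _).
  by exists X; apply: col_eq => j; rewrite colE -mulmxA -colE hX.
rewrite mxrankMfree // mxrankMfree // mxrank_tr (eqP Gfree).
lia.
Qed.
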